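(* For every $n\ge4$, the function $f_n(x_1,\ldots,x_n)=x_1x_2\vee x_1x_3\vee\cdots\vee x_1x_{n-1}\vee x_2x_3\cdots x_n$ is a positive threshold function depending on all its variables, it is not linear read-once, and its specification number in $\mathcal{H}_n$ is $\sigma_{\mathcal{H}_n}(f_n)=n+1$.
   Context: $f$ on $\{0,1\}^n$ is positive if $f(\mathbf{x})=1$ and $\mathbf{x}\le\mathbf{y}$ coordinatewise imply $f(\mathbf{y})=1$. $f$ is a threshold function if there are $w_1,\ldots,w_n,t\in\mathbb{R}$ with $f(\mathbf{x})=0\iff\sum_iw_ix_i\le t$. $\mathcal{H}_n$ is the class of threshold functions of $n$ variables. A set $S\subseteq\{0,1\}^n$ specifies $f\in\mathcal{H}_n$ if $f$ is the only function in $\mathcal{H}_n$ agreeing with $f$ on $S$; $\sigma_{\mathcal{H}_n}(f)$ is the minimum size of such a set. Linear read-once (lro): constant or representable by a nested formula (literals are nested; $x\vee t$, $x\wedge t$, $\overline{x}\vee t$, $\overline{x}\wedge t$ are nested when $t$ is nested and contains neither $x$ nor $\overline{x}$). *)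

(* Defs.v *)
From HB Require Import structures.
From mathcomp Require Import all_boot all_order all_algebra.
Set Implicit Arguments. Unset Strict Implicit. Unset Printing Implicit Defensive.
Import Order.TTheory GRing.Theory Num.Theory.

(* The cube {0,1}^n, coordinates indexed by 'I_n (x_{i+1} is x i). *)
Definition cube (n : nat) := {ffun 'I_n -> bool}.
Definition boolfun (n : nat) := {ffun cube n -> bool}.

Definition positive n (f : boolfun n) : Prop :=
  forall x y : cube n, f x -> (forall i, x i <= y i) -> f y.

Definition threshold (R : realFieldType) n (f : boolfun n) : Prop :=
  exists (w : 'I_n -> R) (t : R),
    forall x : cube n, (f x = false) <-> (\sum_(i < n) w i * (x i)%:R <= t)%R.

Definition flip n (x : cube n) (i : 'I_n) : cube n :=
  [ffun j => if j == i then ~~ x j else x j].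

Definition depends_on_all n (f : boolfun n) : Prop :=
  forall i : 'I_n, exists x : cube n, f x != f (flip x i).

Inductive nested (n : nat) : Type :=
| NLit of 'I_n & bool                (* literal: x_i if true, ~x_i if false *)
| NOr  of 'I_n & bool & nested n
| NAnd of 'I_n & bool & nested n.

Definition lit n (x : cube n) (i : 'I_n) (b : bool) : bool :=
  if b then x i else ~~ x i.

Fixpoint nvars n (phi : nested n) : seq 'I_n :=
  match phi with
  | NLit i _ => [:: i]
  | NOr i _ t => i :: nvars t
  | NAnd i _ t => i :: nvars t
  end.

Fixpoint nwf n (phi : nested n) : bool :=
  match phi with
  | NLit _ _ => true
  | NOr i _ t => (i \notin nvars t) && nwf t
  | NAnd i _ t => (i \notin nvars t) && nwf t
  end.

Fixpoint neval n (phi : nested n) (x : cube n) : bool :=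
  match phi with
  | NLit i b => lit x i b
  | NOr i b t => lit x i b || neval t x
  | NAnd i b t => lit x i b && neval t x
  end.

Definition lro n (f : boolfun n) : Prop :=
  (exists b : bool, forall x, f x = b) \/
  (exists phi : nested n, nwf phi /\ forall x, f x = neval phi x).

Definition specifies (R : realFieldType) n (f : boolfun n) (S : {set cube n}) : Prop :=
  threshold R f /\
  forall g : boolfun n, threshold R g -> {in S, forall x, g x = f x} -> g = f.

Definition spec_number_is (R : realFieldType) n (f : boolfun n) (k : nat) : Prop :=
  (exists S : {set cube n}, specifies R f S /\ #|S| = k) /\
  (forall S : {set cube n}, specifies R f S -> k <= #|S|).

(* f_n = x1x2 \/ ... \/ x1x_{n-1} \/ x2x3...xn  (0-based indices) *)
Definition fn (n : nat) : boolfun n :=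
  [ffun x : cube n =>
     [exists i : 'I_n, exists j : 'I_n,
        [&& val i == 0, 1 <= val j, val j <= n - 2, x i & x j]]
     || [forall j : 'I_n, (0 < val j) ==> x j]].

(* Main.v *)
Require Import Defs.
From HB Require Import structures.
From mathcomp Require Import all_boot all_order all_algebra.
From mathcomp Require Import zify ring lra.
Set Implicit Arguments. Unset Strict Implicit. Unset Printing Implicit Defensive.
Import Order.TTheory GRing.Theory Num.Theory.

Section Main.
Variable k : nat.
Local Notation n := k.+4.
Definition mid (i : 'I_n) : bool := (0 < i) && (i <= k.+2).

Lemma trich (i : 'I_n) : [|| i == ord0, i == ord_max | mid i].
Proof. rewrite /mid -!(inj_eq val_inj) /=. have := ltn_ord i. lia. Qed.

Lemma mid0 (i : 'I_n) : mid i -> i != ord0.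
Proof. rewrite /mid -!(inj_eq val_inj) /=. lia. Qed.
Lemma midmax (i : 'I_n) : mid i -> i != ord_max.
Proof. rewrite /mid -!(inj_eq val_inj) /=. lia. Qed.

Lemma fnE (x : cube n) : fn n x =
  x ord0 && [exists i, mid i && x i] || x ord_max && [forall i, mid i ==> x i].
Proof.
rewrite ffunE; congr (_ || _).
  apply/idP/idP.
    move=> /existsP [i /existsP [j /and5P [Hi H1 H2 xi xj]]].
    have -> : ord0 = i by apply: val_inj; rewrite /= (eqP Hi).
    rewrite xi /=; apply/existsP; exists j; rewrite xj andbT /mid.
    move: H1 H2; rewrite /=; lia.
  move=> /andP [x0 /existsP [j /andP [Hj xj]]].
  apply/existsP; exists ord0; apply/existsP; exists j.
  rewrite x0 xj /=; move: Hj; rewrite /mid; lia.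
apply/idP/idP.
  move=> /forallP H; apply/andP; split; first exact: (implyP (H ord_max)).
  apply/forallP => i; apply/implyP => /andP [Hi _]; exact: (implyP (H i)).
move=> /andP [xm /forallP H]; apply/forallP => i; apply/implyP => Hi.
have := trich i; case/or3P => [/eqP Ei|/eqP ->//|Hm]; last exact: (implyP (H i)).
by move: Hi; rewrite Ei.
Qed.

Lemma card_mid : #|[pred i | mid i]| = k.+2.
Proof.
have := cardC [pred i | mid i].
have -> : #|[predC [pred i | mid i]]| = #|pred2 (ord0 : 'I_n) ord_max|.
  apply: eq_card => i; rewrite !inE /= /mid -!(inj_eq val_inj) /=.
  have := ltn_ord i; lia.
rewrite card2 card_ord.
have -> : (ord0 : 'I_n) != ord_max by rewrite -(inj_eq val_inj).
move=> H; have H2 : #|[pred i | mid i]| + 2 = k.+4 by exact: H.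
lia.
Qed.

Definition M (j : 'I_n) := \sum_(i | mid i && (i != j)) 1.
Definition msum (j : 'I_n) (x : cube n) := \sum_(i | mid i && (i != j)) (x i : nat).

Lemma M_val j : mid j -> M j = k.+1.
Proof.
move=> Hj; rewrite /M sum1_card.
have := cardD1x (A := [pred i | mid i]) Hj.
rewrite card_mid => H.
have -> : #|[pred i | mid i && (i != j)]| = #|[pred i | [pred i0 | mid i0] i & i != j]|.
  by apply: eq_card => i.
by move/eqP: H; rewrite add1n eqSS eq_sym => /eqP.
Qed.

Lemma M_split j (x : cube n) : M j = msum j x + \sum_(i | mid i && (i != j)) (~~ x i : nat).
Proof.
rewrite /M /msum -big_split /=; apply: eq_bigr => i _; by case: (x i).
Qed.

Lemma msum_le j (x : cube n) : msum j x <= M j.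
Proof. rewrite (M_split j x); exact: leq_addr. Qed.

Lemma msum0 j (x : cube n) : (msum j x == 0) = [forall i, (mid i && (i != j)) ==> ~~ x i].
Proof.
rewrite /msum sum_nat_eq0; apply/forallP/forallP => H i; have := H i;
  by case: (mid i && (i != j)); case: (x i).
Qed.

Lemma msumM j (x : cube n) : (msum j x == M j) = [forall i, (mid i && (i != j)) ==> x i].
Proof.
rewrite (M_split j x) -{1}(addn0 (msum j x)) eqn_add2l eq_sym sum_nat_eq0.
apply/forallP/forallP => H i; have := H i;
  by case: (mid i && (i != j)); case: (x i).
Qed.

Lemma existsmid j (x : cube n) : mid j -> [exists i, mid i && x i] = x j || (0 < msum j x).
Proof.
move=> Hj; rewrite lt0n msum0; apply/idP/idP.
  move=> /existsP [i /andP [Hi xi]].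
  case: (eqVneq i j) => [<-|ne]; first by rewrite xi.
  apply/orP; right; apply/negP => /forallP /(_ i); by rewrite Hi ne xi.
case/orP => [xj|]; first by apply/existsP; exists j; rewrite Hj xj.
move=> /forallPn [i]; rewrite negb_imply negbK => /andP [/andP [Hi _] xi].
by apply/existsP; exists i; rewrite Hi xi.
Qed.

Lemma forallmid j (x : cube n) : mid j -> [forall i, mid i ==> x i] = x j && (msum j x == M j).
Proof.
move=> Hj; rewrite msumM; apply/idP/idP.
  move=> /forallP H; rewrite (implyP (H j) Hj) /=.
  apply/forallP => i; apply/implyP => /andP [Hi _]; exact: (implyP (H i)).
move=> /andP [xj /forallP H]; apply/forallP => i; apply/implyP => Hi.
case: (eqVneq i j) => [->//|ne]; exact: (implyP (H i) (introT andP (conj Hi ne))).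
Qed.

Definition Fc (c0 cl cj : bool) (m MM : nat) :=
  c0 && (cj || (0 < m)) || cl && (cj && (m == MM)).

Lemma fnC j (x : cube n) : mid j -> fn n x = Fc (x ord0) (x ord_max) (x j) (msum j x) (M j).
Proof. move=> Hj; by rewrite fnE (existsmid x Hj) (forallmid x Hj). Qed.


Definition P (j : 'I_n) (b0 bl bj bo : bool) : cube n :=
  [ffun i => if i == ord0 then b0 else if i == ord_max then bl else if i == j then bj else bo].

Lemma ord0max : (ord0 : 'I_n) != ord_max.
Proof. by rewrite -(inj_eq val_inj). Qed.

Lemma P0 j b0 bl bj bo : P j b0 bl bj bo ord0 = b0.
Proof. by rewrite ffunE eqxx. Qed.
Lemma Pmax j b0 bl bj bo : P j b0 bl bj bo ord_max = bl.
Proof. by rewrite ffunE eq_sym (negPf ord0max) eqxx. Qed.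
Lemma Pj j b0 bl bj bo : mid j -> P j b0 bl bj bo j = bj.
Proof. by move=> Hj; rewrite ffunE (negPf (mid0 Hj)) (negPf (midmax Hj)) eqxx. Qed.
Lemma Pmid j b0 bl bj bo i : mid i -> i != j -> P j b0 bl bj bo i = bo.
Proof. by move=> Hi ne; rewrite ffunE (negPf (mid0 Hi)) (negPf (midmax Hi)) (negPf ne). Qed.

Lemma msum_P j b0 bl bj bo : msum j (P j b0 bl bj bo) = if bo then M j else 0.
Proof.
rewrite /msum /M; under eq_bigr => i /andP [Hi ne] do rewrite (Pmid _ _ _ _ Hi ne).
case: bo => //; exact: big1.
Qed.

Lemma eqP_char j b0 bl bj bo (x : cube n) : mid j ->
  (x == P j b0 bl bj bo) = [&& x ord0 == b0, x ord_max == bl, x j == bj &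
                               (if bo then msum j x == M j else msum j x == 0)].
Proof.
move=> Hj; apply/eqP/idP.
  move=> ->; rewrite P0 Pmax Pj // msum_P; by case: bo; rewrite !eqxx.
move=> /and4P [/eqP h0 /eqP hl /eqP hj hm]; apply/ffunP => i; rewrite ffunE.
have := trich i; case/or3P => [/eqP->|/eqP->|Hi].
- by rewrite eqxx.
- by rewrite eq_sym (negPf ord0max) eqxx.
rewrite (negPf (mid0 Hi)) (negPf (midmax Hi)).
case: (eqVneq i j) => [->//|ne].
case: bo hm.
  by rewrite msumM => /forallP /(_ i); rewrite Hi ne /= => ->.
by rewrite msum0 => /forallP /(_ i); rewrite Hi ne /= => /negPf ->.
Qed.

Lemma fnP j b0 bl bj bo : mid j ->
  fn n (P j b0 bl bj bo) = Fc b0 bl bj (if bo then M j else 0) (M j).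
Proof. by move=> Hj; rewrite (fnC _ Hj) P0 Pmax Pj // msum_P. Qed.

Lemma decomp_mid (R : Type) (idx : R) (op : Monoid.com_law idx) (F : 'I_n -> R) :
  \big[op/idx]_i F i = op (F ord0) (op (F ord_max) (\big[op/idx]_(i | mid i) F i)).
Proof.
rewrite (bigD1 ord0) //= (bigD1 ord_max) //=.
congr (op _ (op _ _)); apply: eq_bigl => i.
rewrite /mid -!(inj_eq val_inj) /=; have := ltn_ord i; lia.
Qed.

Lemma thr_count (R : realFieldType) (g : boolfun n) j (G : bool -> bool -> bool -> nat -> bool)
   a b c d t : mid j -> (forall x, g x = G (x ord0) (x ord_max) (x j) (msum j x)) ->
  (forall b0 bl bj m, m <= M j -> (G b0 bl bj m = false <-> a * b0 + b * bl + d * bj + c * m <= t)) ->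
  threshold R g.
Proof.
move=> Hj Hg HG.
exists (fun i => ((if i == ord0 then a else if i == ord_max then b else if i == j then d else c)%:R : R)%R), (t%:R)%R => x.
pose wn (i : 'I_n) := if i == ord0 then a else if i == ord_max then b else if i == j then d else c.
have -> : (\sum_(i < n) (wn i)%:R * (x i)%:R = ((a * x ord0 + b * x ord_max + d * x j + c * msum j x)%N)%:R :> R)%R.
  have -> : (a * x ord0 + b * x ord_max + d * x j + c * msum j x = \sum_(i < n) wn i * x i)%N.
    rewrite (decomp_mid _ (fun i => wn i * x i)) (bigD1 j) //=.
    have -> : (\sum_(i | mid i && (i != j)) wn i * x i = c * msum j x)%N.
      rewrite /msum big_distrr /=; apply: eq_bigr => i /andP [Hi ne].
      by rewrite /wn (negPf (mid0 Hi)) (negPf (midmax Hi)) (negPf ne).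
    rewrite /wn eqxx eq_sym (negPf ord0max) eqxx (negPf (mid0 Hj)) (negPf (midmax Hj)) eqxx.
    lia.
  rewrite natr_sum; apply: eq_bigr => i _; by rewrite natrM.
rewrite ler_nat Hg; apply: HG; exact: msum_le.
Qed.


Definition Sc (b0 bl bj bo c0 cl cj : bool) (m MM : nat) :=
  [&& c0 == b0, cl == bl, cj == bj & (if bo then m == MM else m == 0)].

Lemma essential (R : realFieldType) (S : {set cube n}) j b0 bl bj bo a b c d t :
  mid j -> specifies R (fn n) S ->
  (forall c0 cl cj m, m <= M j ->
     ((Fc c0 cl cj m (M j) (+) Sc b0 bl bj bo c0 cl cj m (M j)) = false <->
      a * c0 + b * cl + d * cj + c * m <= t)) ->
  P j b0 bl bj bo \in S.
Proof.
move=> Hj [_ Hsp] H; apply/negPn/negP => Hn.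
pose g : boolfun n := [ffun x => fn n x (+) (x == P j b0 bl bj bo)].
have Tg : threshold R g.
  apply: (@thr_count R g j (fun c0 cl cj m => Fc c0 cl cj m (M j) (+) Sc b0 bl bj bo c0 cl cj m (M j)) a b c d t Hj _ H).
  by move=> x; rewrite ffunE (fnC x Hj) (eqP_char _ _ _ _ x Hj).
have E : g = fn n.
  apply: Hsp Tg _ => x xS; rewrite ffunE.
  case: eqP => [ex|_]; last by rewrite addbF.
  by move: Hn; rewrite -ex xS.
have := congr1 (fun h : boolfun n => h (P j b0 bl bj bo)) E; rewrite /= ffunE eqxx.
by case: (fn n _).
Qed.

Lemma test1 j : mid j -> forall c0 cl cj m, m <= M j ->
     ((Fc c0 cl cj m (M j) (+) Sc true false true false c0 cl cj m (M j)) = false <->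
      (4*k+5) * c0 + 2 * cl + 3 * cj + 4 * m <= 4*k+8).
Proof.
move=> Hj c0 cl cj m; rewrite M_val // /Fc /Sc.
case: c0; case: cl; case: cj => /=; lia.
Qed.


Definition j1 : 'I_n := Ordinal (isT : 1 < n).
Definition j2 : 'I_n := Ordinal (isT : 2 < n).
Lemma midj1 : mid j1. Proof. by []. Qed.
Lemma midj2 : mid j2. Proof. by []. Qed.

Lemma Pmid_same j b0 bl b i : mid i -> P j b0 bl b b i = b.
Proof. move=> Hi; case: (eqVneq i j) => [<-|ne]; [exact: (Pj _ _ _ _ Hi) | exact: (Pmid _ _ _ _ Hi ne)]. Qed.

Local Open Scope ring_scope.

Section Real.
Variable R : realFieldType.
Variable w : 'I_n -> R.
Definition Wm (x : cube n) := \sum_(i | mid i) w i * (x i)%:R.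
Definition A := \sum_(i | mid i) w i.

Lemma W_dec (x : cube n) : \sum_(i < n) w i * (x i)%:R =
   w ord0 * (x ord0)%:R + (w ord_max * (x ord_max)%:R + Wm x).
Proof. by rewrite (decomp_mid _ (fun i => w i * (x i)%:R)). Qed.

Lemma split_mid (x : cube n) i : mid i -> (forall l, mid l -> 0 <= w l) ->
  exists r, [/\ Wm x = w i * (x i)%:R + r, 0 <= r & r <= A - w i].
Proof.
move=> Hi wp; exists (\sum_(l | mid l && (l != i)) w l * (x l)%:R); split.
- by rewrite /Wm (bigD1 i).
- by apply: sumr_ge0 => l /andP [Hl _]; apply: mulr_ge0; [exact: wp l Hl | exact: ler0n].
rewrite /A [X in _ <= X - _](bigD1 i) //= addrC addrK.
apply: ler_sum => l /andP [Hl _]; case: (x l); rewrite ?mulr1 ?mulr0 //; exact: wp l Hl.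
Qed.

Lemma Wm_all (x : cube n) : (forall i, mid i -> x i) -> Wm x = A.
Proof. by move=> H; apply: eq_bigr => i Hi; rewrite H // mulr1. Qed.

Lemma Wm_none (x : cube n) : (forall i, mid i -> ~~ x i) -> Wm x = 0.
Proof. by move=> H; apply: big1 => i Hi; rewrite (negPf (H i Hi)) mulr0. Qed.

Lemma Wm_Pj j : mid j -> Wm (P j true false true false) = w j.
Proof.
move=> Hj; rewrite /Wm (bigD1 j) //= Pj // mulr1 big1 ?addr0 // => i /andP [Hi ne].
by rewrite Pmid // mulr0.
Qed.
End Real.

Lemma uniq_thr (R : realFieldType) (g : boolfun n) : threshold R g ->
  (forall j, mid j -> g (P j true false true false) = true) ->
  g (P j1 true true false false) = false ->
  g (P j1 false false true true) = false ->
  g (P j1 false true true true) = true -> g = fn n.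
Proof.
move=> [w [t Hw]] Ha Hb Hc Hd.
have Hg : forall x, g x = ~~ (\sum_(i < n) w i * (x i)%:R <= t).
  move=> x; case E: (g x); move: E.
    by case: (boolP (_ <= t)) => // /Hw ->.
  by move/Hw => ->.
have fa : forall j, mid j -> t < w ord0 + w j.
  move=> j Hj; move: (Ha j Hj); rewrite Hg W_dec Wm_Pj // P0 Pmax /= mulr1 mulr0 add0r.
  by rewrite -ltNge.
have fb : w ord0 + w ord_max <= t.
  move: Hb; rewrite Hg W_dec P0 Pmax Wm_none ?mulr1 ?addr0 => [/negbFE //|i Hi].
  by rewrite Pmid_same.
have fc : A w <= t.
  move: Hc; rewrite Hg W_dec P0 Pmax Wm_all ?mulr0 ?add0r => [/negbFE //|i Hi].
  by rewrite Pmid_same.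
have fd : t < w ord_max + A w.
  move: Hd; rewrite Hg W_dec P0 Pmax Wm_all ?mulr0 ?mulr1 ?add0r => [|i Hi].
    by rewrite -ltNge.
  by rewrite Pmid_same.
have wl0 : 0 < w ord_max by lra.
have wj : forall j, mid j -> w ord_max < w j.
  by move=> j Hj; have := fa j Hj; lra.
have wp : forall l, mid l -> 0 <= w l.
  by move=> l Hl; have := wj l Hl; lra.
have w00 : 0 < w ord0.
  have : w j1 + w j2 <= A w.
    rewrite /A (bigD1 j1) //= (bigD1 j2) //= addrA lerDl.
    by apply: sumr_ge0 => l /andP [/andP [Hl _] _]; exact: wp.
  have := fa j1 midj1; have := wj j2 midj2; lra.
apply/ffunP => x; rewrite Hg fnE W_dec.
have x0p : 0 <= w ord0 * (x ord0)%:R by apply: mulr_ge0; [lra|exact: ler0n].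
have xlp : 0 <= w ord_max * (x ord_max)%:R by apply: mulr_ge0; [lra|exact: ler0n].
case E1: (x ord0 && [exists i, mid i && x i]).
  move/andP: E1 => [x0 /existsP [i /andP [Hi xi]]].
  have [r [-> r0 _]] := split_mid x Hi wp.
  rewrite x0 xi /= !mulr1 -ltNge; have := fa i Hi; lra.
case E2: (x ord_max && [forall i, mid i ==> x i]).
  move/andP: E2 => [xl /forallP H].
  rewrite Wm_all; last by move=> i Hi; exact: (implyP (H i)).
  rewrite xl /= mulr1 -ltNge; lra.
rewrite /=; apply/negbTE; rewrite negbK.
case x0: (x ord0).
  rewrite Wm_none; last first.
    move=> i Hi; apply/negP => xi; move: E1; rewrite x0 /=.
    by move/negbT/existsPn/(_ i); rewrite Hi xi.
  rewrite mulr1 addr0; case: (x ord_max); rewrite ?mulr1 ?mulr0; lra.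
rewrite mulr0 add0r.
case xl: (x ord_max).
  move: E2; rewrite xl /= => /negbT /forallPn [i]; rewrite negb_imply => /andP [Hi xi].
  have [r [-> r0 r1]] := split_mid x Hi wp.
  rewrite (negPf xi) !mulr0 mulr1 add0r; have := wj i Hi; lra.
have [r [-> r0 r1]] := split_mid x midj1 wp.
have := wp j1 midj1; rewrite mulr0 add0r; case: (x j1); rewrite ?mulr1 ?mulr0; lra.
Qed.

Local Close Scope ring_scope.

Lemma flipP0 j b0 bl bj bo : flip (P j b0 bl bj bo) ord0 = P j (~~ b0) bl bj bo.
Proof. apply/ffunP => l; rewrite !ffunE; by case: (l == ord0). Qed.

Lemma flipPmax j b0 bl bj bo : flip (P j b0 bl bj bo) ord_max = P j b0 (~~ bl) bj bo.
Proof.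
apply/ffunP => l; rewrite !ffunE.
have [->|h0] := eqVneq l ord_max; first by rewrite eq_sym (negPf ord0max).
by case: (_ == ord0).
Qed.

Lemma flipPj j b0 bl bj bo : mid j -> flip (P j b0 bl bj bo) j = P j b0 bl (~~ bj) bo.
Proof.
move=> Hj; apply/ffunP => l; rewrite !ffunE.
have [->|h0] := eqVneq l j; first by rewrite (negPf (mid0 Hj)) (negPf (midmax Hj)).
by [].
Qed.

Lemma Mpos j : mid j -> 0 < M j.
Proof. by move=> Hj; rewrite M_val. Qed.

Lemma fn_pos : positive (fn n).
Proof.
move=> x y; have mono : (forall i, x i <= y i) -> forall i, x i -> y i.
  by move=> H i xi; have := H i; rewrite xi; case: (y i).
move=> Hx H; move: (mono H) Hx => {}H; rewrite !fnE.
case/orP => [/andP [x0 /existsP [i /andP [Hi xi]]] | /andP [xl /forallP Hx]]; apply/orP.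
  left; rewrite (H _ x0) /=; apply/existsP; exists i; by rewrite Hi (H _ xi).
right; rewrite (H _ xl) /=; apply/forallP => i; apply/implyP => Hi.
exact: (H _ (implyP (Hx i) Hi)).
Qed.

Lemma fn_thr (R : realFieldType) : threshold R (fn n).
Proof.
apply: (@thr_count R (fn n) j1 (fun c0 cl cj m => Fc c0 cl cj m (M j1)) (2*k+3) 1 2 2 (2*k+4) midj1).
  by move=> x; rewrite (fnC x midj1).
move=> c0 cl cj m; rewrite M_val // /Fc; case: c0; case: cl; case: cj => /=; lia.
Qed.

Lemma fn_dep : depends_on_all (fn n).
Proof.
move=> i; have := trich i; case/or3P => [/eqP->|/eqP->|Hi].
- exists (P j1 true false true false).
  by rewrite flipP0 !(fnP _ _ _ _ midj1) /Fc /= ?Mpos.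
- exists (P j1 false true true true).
  by rewrite flipPmax !(fnP _ _ _ _ midj1) /Fc /= ?eqxx.
exists (P i true false true false).
by rewrite flipPj // !(fnP _ _ _ _ Hi) /Fc /=.
Qed.

Lemma fn_lit (i : 'I_n) (v : bool) : (exists x : cube n, x i = v /\ fn n x) /\ (exists x : cube n, x i = v /\ ~~ fn n x).
Proof.
have := trich i; case/or3P => [/eqP->|/eqP->|Hi].
- split.
    exists (P j1 v (~~ v) true (~~ v)); rewrite P0 (fnP _ _ _ _ midj1) /Fc.
    by case: v => /=; rewrite ?eqxx.
  by exists (P j1 v false false false); rewrite P0 (fnP _ _ _ _ midj1) /Fc /= andbF.
- split.
    exists (P j1 (~~ v) v true v); rewrite Pmax (fnP _ _ _ _ midj1) /Fc.
    by case: v => /=; rewrite ?eqxx.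
  by exists (P j1 false v false false); rewrite Pmax (fnP _ _ _ _ midj1) /Fc /= andbF.
split.
  exists (P i true false v (~~ v)); rewrite Pj // (fnP _ _ _ _ Hi) /Fc.
  by case: v => /=; rewrite ?Mpos.
by exists (P i false false v false); rewrite Pj // (fnP _ _ _ _ Hi) /Fc /=.
Qed.

Lemma fn_not_lro : ~ lro (fn n).
Proof.
case => [[b Hb] | [phi [_ Hphi]]].
  have [[x [_ Hx]] [y [_ Hy]]] := fn_lit ord0 true.
  by move: Hy; rewrite Hb -(Hb x) Hx.
case: phi Hphi => [i b | i b t | i b t] /= H.
- have [[x [xi Hx]] _] := fn_lit i (~~ b).
  by move: Hx; rewrite H /lit xi; clear H xi; case: b.
- have [_ [x [xi Hx]]] := fn_lit i b.
  by move: Hx; rewrite H /lit xi; clear H xi; case: b.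
- have [[x [xi Hx]] _] := fn_lit i (~~ b).
  by move: Hx; rewrite H /lit xi; clear H xi; case: b.
Qed.


Definition Img : {set cube n} := [set P i true false true false | i in [set i | mid i]].
Definition Sset : {set cube n} :=
  P j1 false false true true |: (P j1 true true false false |: (P j1 false true true true |: Img)).

Lemma in_Img x : x \in Img -> x ord0 = true /\ x ord_max = false.
Proof. by case/imsetP => i _ ->; rewrite P0 Pmax. Qed.

Lemma Img_card : #|Img| = k.+2.
Proof.
rewrite card_in_imset.
  rewrite -[in RHS]card_mid; apply: eq_card => i; by rewrite inE.
move=> i i' Hi Hi' E; rewrite !inE in Hi Hi'.
have := congr1 (fun x : cube n => x i) E; rewrite Pj //.
case: (eqVneq i i') => [//|ne]; by rewrite Pmid.
Qed.

Lemma Sset_card : #|Sset| = n.+1.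
Proof.
rewrite /Sset !cardsU1 Img_card !inE.
have h1 : P j1 false true true true \notin Img.
  by apply/negP => /in_Img []; rewrite P0.
have h2 : P j1 true true false false \notin Img.
  by apply/negP => /in_Img []; rewrite Pmax.
have h3 : P j1 false false true true \notin Img.
  by apply/negP => /in_Img []; rewrite P0.
have e12 : P j1 true true false false != P j1 false true true true.
  by apply/negP => /eqP /(congr1 (fun x : cube n => x ord0)); rewrite !P0.
have e01 : P j1 false false true true != P j1 true true false false.
  by apply/negP => /eqP /(congr1 (fun x : cube n => x ord0)); rewrite !P0.
have e02 : P j1 false false true true != P j1 false true true true.
  by apply/negP => /eqP /(congr1 (fun x : cube n => x ord_max)); rewrite !Pmax.
by rewrite (negPf h2) (negPf h3) (negPf e12) (negPf e01) (negPf e02) h1.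
Qed.

Lemma Sset_spec (R : realFieldType) : specifies R (fn n) Sset.
Proof.
split; first exact: fn_thr.
move=> g Tg Hg; apply: (uniq_thr Tg).
- move=> j Hj; rewrite Hg; last by rewrite /Sset !in_setU1; apply/orP; right; apply/orP; right; apply/orP; right; apply/imsetP; exists j; rewrite ?inE.
  by rewrite (fnP _ _ _ _ Hj).
- by rewrite Hg ?(fnP _ _ _ _ midj1) // !inE eqxx ?orbT.
- by rewrite Hg ?(fnP _ _ _ _ midj1) // !inE eqxx ?orbT.
- by rewrite Hg ?(fnP _ _ _ _ midj1) /Fc /= ?eqxx // !inE eqxx ?orbT.
Qed.

Lemma Sset_min (R : realFieldType) (S : {set cube n}) : specifies R (fn n) S -> Sset \subset S.
Proof.
move=> HS; apply/subsetP => x; rewrite !inE => /or4P [/eqP->|/eqP->|/eqP->|].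
- apply: (@essential R S j1 false false true true (2*k+2) 1 2 2 (2*k+3) midj1 HS).
  move=> c0 cl cj m; rewrite M_val // /Fc /Sc; case: c0; case: cl; case: cj => /=; lia.
- apply: (@essential R S j1 true true false false (2*k+3) 2 2 2 (2*k+4) midj1 HS).
  move=> c0 cl cj m; rewrite M_val // /Fc /Sc; case: c0; case: cl; case: cj => /=; lia.
- apply: (@essential R S j1 false true true true (k+2) 0 1 1 (k+2) midj1 HS).
  move=> c0 cl cj m; rewrite M_val // /Fc /Sc; case: c0; case: cl; case: cj => /=; lia.
case/imsetP => j; rewrite inE => Hj ->.
apply: (@essential R S j true false true false (4*k+5) 2 4 3 (4*k+8) Hj HS).
move=> c0 cl cj m; rewrite M_val // /Fc /Sc; case: c0; case: cl; case: cj => /=; lia.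
Qed.

Lemma main_k (R : realFieldType) :
  positive (fn n) /\ threshold R (fn n) /\ depends_on_all (fn n) /\
  ~ lro (fn n) /\ spec_number_is R (fn n) n.+1.
Proof.
split; first exact: fn_pos.
split; first exact: fn_thr.
split; first exact: fn_dep.
split; first exact: fn_not_lro.
split.
  by exists Sset; split; [exact: Sset_spec | exact: Sset_card].
move=> S HS; rewrite -Sset_card; apply: subset_leq_card; exact: Sset_min HS.
Qed.

End Main.

Theorem mainTheorem18 (R : realFieldType) (n : nat) : 4 <= n ->
  positive (fn n) /\ threshold R (fn n) /\ depends_on_all (fn n) /\
  ~ lro (fn n) /\ spec_number_is R (fn n) n.+1.
Proof.
move=> hn; have [k ->] : exists k, n = k.+4 by exists (n - 4); lia.
exact: main_k.
Qed.
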